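(* Let $(\Omega,\mathcal{F})$ be a measurable space, $\mathrm{B}_b$ the space of bounded real-valued measurable functions on $\Omega$, and $C\subset\mathrm{B}_b$ a linear subspace containing all constant functions. Let $H\colon C\to\mathbb{R}$ be a convex premium principle and let $R_{\mathrm{Max}}(X):=\inf\{H(X_0)\mid X_0\in C,\ X_0\ge X\}$ for $X\in\mathrm{B}_b$. Then $$R_{\mathrm{Max}}(X)=\max_{\mathbb{P}\in\mathrm{ba}_+^1}\big(\mathbb{E}_{\mathbb{P}}(X)-H^*(\mathbb{P})\big)\quad\text{for all }X\in\mathrm{B}_b,$$ and $$H^*(\mathbb{P})=\sup_{X\in\mathrm{B}_b}\big(\mathbb{E}_{\mathbb{P}}(X)-R_{\mathrm{Max}}(X)\big)\quad\text{for all }\mathbb{P}\in\mathrm{ba}_+^1.$$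
   Context: A premium principle is a map $H\colon C\to\mathbb{R}$ with $H(X+m)=H(X)+m$ for $X\in C$, $m\in\mathbb{R}$, $H(0)=0$, and $H(X)\ge 0$ for $X\in C$ with $X\ge 0$ (pointwise order). $H$ is convex if $H(\lambda X+(1-\lambda)Y)\le\lambda H(X)+(1-\lambda)H(Y)$ for $\lambda\in[0,1]$, $X,Y\in C$. $\mathrm{ba}_+^1$ denotes the set of finitely additive probability measures on $(\Omega,\mathcal{F})$, $\mathbb{E}_{\mathbb{P}}$ the corresponding integral of bounded measurable functions, and $H^*(\mathbb{P}):=\sup_{X\in C}(\mathbb{E}_{\mathbb{P}}(X)-H(X))\in[0,\infty]$. *)

(* Defs.v *)
From HB Require Import structures.
From mathcomp Require Import all_boot all_order all_algebra.
From mathcomp Require Import all_classical all_reals all_analysis.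
Set Implicit Arguments. Unset Strict Implicit. Unset Printing Implicit Defensive.
Import Order.TTheory GRing.Theory Num.Theory.
Local Open Scope classical_set_scope.
Local Open Scope ring_scope.

Section Defs.
Context {d : measure_display} {T : measurableType d} {R : realType}.

Definition Bb : set (T -> R) :=
  [set f : T -> R | measurable_fun setT f /\ exists M : R, forall x, `|f x| <= M].

Definition linear_subspace_with_constants (C : set (T -> R)) : Prop :=
  C `<=` Bb /\
  (forall f g, C f -> C g -> C (f \+ g)) /\
  (forall (a : R) f, C f -> C (fun x => a * f x)) /\
  (forall c : R, C (cst c)).

Definition pw_le (X Y : T -> R) : Prop := forall x, X x <= Y x.

Definition premium_principle (C : set (T -> R)) (H : (T -> R) -> R) : Prop :=
  (forall X (m : R), C X -> H (fun x => X x + m) = H X + m) /\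
  H (cst 0) = 0 /\
  (forall X, C X -> pw_le (cst 0) X -> 0 <= H X).

Definition convex_on (C : set (T -> R)) (H : (T -> R) -> R) : Prop :=
  forall (l : R) X Y, 0 <= l <= 1 -> C X -> C Y ->
    H (fun x => l * X x + (1 - l) * Y x) <= l * H X + (1 - l) * H Y.

(* ba_+^1 : finitely additive probability measures on (Omega, F)
   (only the values on measurable sets matter) *)
Definition ba_prob (P : set T -> R) : Prop :=
  P setT = 1 /\
  (forall A, measurable A -> 0 <= P A) /\
  (forall A B, measurable A -> measurable B -> A `&` B = set0 ->
     P (A `|` B) = P A + P B).

Definition ba_integral (P : set T -> R) (X : T -> R) : R :=
  sup [set r | exists (n : nat) (c : 'I_n -> R) (A : 'I_n -> set T),
         (forall i, measurable (A i)) /\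
         (forall x, \sum_(i < n) c i * \1_(A i) x <= X x) /\
         r = \sum_(i < n) c i * P (A i)].

Definition Hstar (C : set (T -> R)) (H : (T -> R) -> R) (P : set T -> R)
  : \bar R :=
  ereal_sup [set ((ba_integral P X - H X)%:E) | X in C].

Definition RMax (C : set (T -> R)) (H : (T -> R) -> R) (X : T -> R) : R :=
  inf [set H X0 | X0 in [set X0 | C X0 /\ pw_le X X0]].

End Defs.

(* Main.v *)
Require Import Defs.
From HB Require Import structures.
From mathcomp Require Import all_boot all_order all_algebra.
From mathcomp Require Import all_classical all_reals all_analysis.
From mathcomp Require Import ring lra measurable_realfun.
Set Implicit Arguments. Unset Strict Implicit. Unset Printing Implicit Defensive.
Import Order.TTheory GRing.Theory Num.Theory.
Local Open Scope classical_set_scope.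
Local Open Scope ring_scope.


Section Aux.
Context {d : measure_display} {T : measurableType d} {R : realType}.
Implicit Types (f g X Y : T -> R).

Lemma Bb_add f g : Bb f -> Bb g -> Bb (fun x => f x + g x).
Proof.
move=> [mf [M hM]] [mg [N hN]]; split; first exact: measurable_funD.
exists (M + N) => x; apply: (le_trans (ler_normD _ _)); exact: lerD.
Qed.

Lemma Bb_scale (a : R) f : Bb f -> Bb (fun x => a * f x).
Proof.
move=> [mf [M hM]]; split.
  exact: (measurable_funM (measurable_cst a) mf).
exists (`|a| * M) => x; rewrite normrM; exact: ler_wpM2l.
Qed.

Lemma Bb_cst (c : R) : Bb (cst c : T -> R).
Proof. split; [exact: measurable_cst | by exists `|c|]. Qed.

Lemma Bb_ind (A : set T) : measurable A -> Bb (\1_A : T -> R).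
Proof.
move=> mA; split; first exact: measurable_indic.
exists 1 => x; rewrite indicE; case: (_ \in _); rewrite ?normr1 ?normr0 //.
Qed.

Lemma Bb_bound f : Bb f -> exists M, 0 <= M /\ forall x, - M <= f x <= M.
Proof.
move=> [_ [M hM]]; exists `|M|; split => // x.
by rewrite -ler_norml (le_trans (hM x)) // ler_norm.
Qed.

Lemma Bb_levelset f (a : R) : Bb f -> measurable [set x | a <= f x].
Proof.
move=> [mf _]; have := mf measurableT `[a, +oo[%classic (measurable_itv _).
by rewrite setTI preimage_itvcy.
Qed.

End Aux.


Section Inf.
Context {R : realType}.
Implicit Types (A : set R).

Lemma inf_le_elem A a : has_lbound A -> A a -> inf A <= a.
Proof. by move=> hA Aa; apply: ge_inf. Qed.

Lemma inf_ge A x : A !=set0 -> (forall a, A a -> x <= a) -> x <= inf A.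
Proof. by move=> nA h; apply: lb_le_inf. Qed.

Lemma inf_approx A e : A !=set0 -> has_lbound A -> 0 < e ->
  exists2 a, A a & a < inf A + e.
Proof. by move=> nA lA e0; apply: inf_adherent. Qed.

End Inf.

Section BA.
Context {d : measure_display} {T : measurableType d} {R : realType}.
Variable P : set T -> R.
Hypothesis hP : ba_prob P.

Lemma ba_set0 : P set0 = 0.
Proof.
case: hP => _ [_ hadd].
have := hadd set0 set0 measurable0 measurable0 (setI0 _).
rewrite setU0 => h; lra.
Qed.

Lemma ba_split (A B : set T) : measurable A -> measurable B ->
  P B = P (B `&` A) + P (B `&` ~` A).
Proof.
move=> mA mB; case: hP => _ [_ hadd].
rewrite -hadd; first by rewrite -setIUr setUCr setIT.
- exact: measurableI.
- exact: measurableI (measurableC _).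
by rewrite setIACA setICr setI0.
Qed.

Lemma ba_simple_le_gen n (c : 'I_n -> R) (A : 'I_n -> set T) (M : R) (B : set T) :
  (forall i, measurable (A i)) -> measurable B ->
  (forall x, B x -> \sum_(i < n) c i * \1_(A i) x <= M) ->
  \sum_(i < n) c i * P (A i `&` B) <= M * P B.
Proof.
elim: n c A M B => [|n IH] c A M B mA mB hB.
  rewrite big_ord0; have [->|/set0P [x Bx]] := eqVneq B set0.
    by rewrite ba_set0 mulr0.
  have := hB x Bx; rewrite big_ord0 => M0.
  have PB0 : 0 <= P B by case: hP => _ [+ _]; apply.
  exact: mulr_ge0.
rewrite big_ord_recr /=.
set c' := fun i : 'I_n => c (widen_ord (leqnSn n) i).
set A' := fun i : 'I_n => A (widen_ord (leqnSn n) i).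
have mA' : forall i, measurable (A' i) by move=> i; exact: mA.
have mAn := mA ord_max.
have h1 := IH c' A' (M - c ord_max) (B `&` A ord_max) mA' (measurableI _ _ mB mAn).
have h2 := IH c' A' M (B `&` ~` A ord_max) mA' (measurableI _ _ mB (measurableC mAn)).
have e1 : forall x, (B `&` A ord_max) x -> \sum_(i < n) c' i * \1_(A' i) x <= M - c ord_max.
  move=> x [Bx Ax]; have := hB x (Bx); rewrite big_ord_recr /= indicE mem_set // mulr1 => h; lra.
have e2 : forall x, (B `&` ~` A ord_max) x -> \sum_(i < n) c' i * \1_(A' i) x <= M.
  move=> x [Bx Ax]; have := hB x (Bx); rewrite big_ord_recr /= indicE memNset // mulr0 addr0.
  by [].
have {h1 e1}h1 := h1 e1; have {h2 e2}h2 := h2 e2.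
have -> : \sum_(i < n) c (widen_ord (leqnSn n) i) * P (A (widen_ord (leqnSn n) i) `&` B)
  = \sum_(i < n) c' i * P (A' i `&` (B `&` A ord_max)) +
    \sum_(i < n) c' i * P (A' i `&` (B `&` ~` A ord_max)).
  rewrite -big_split /=; apply: eq_bigr => i _; rewrite -mulrDr; congr (_ * _).
  by rewrite !setIA; apply: ba_split => //; apply: measurableI.
rewrite [P B](ba_split mAn mB) [A ord_max `&` B]setIC.
nra.
Qed.

Lemma ba_simple_le n (c : 'I_n -> R) (A : 'I_n -> set T) (M : R) :
  (forall i, measurable (A i)) ->
  (forall x, \sum_(i < n) c i * \1_(A i) x <= M) ->
  \sum_(i < n) c i * P (A i) <= M.
Proof.
move=> mA hM; have := @ba_simple_le_gen n c A M setT mA measurableT (fun x _ => hM x).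
case: hP => -> _; rewrite mulr1; under eq_bigr do rewrite setIT; by [].
Qed.

Definition baS (X : T -> R) := [set r | exists (n : nat) (c : 'I_n -> R) (A : 'I_n -> set T),
         (forall i, measurable (A i)) /\
         (forall x, \sum_(i < n) c i * \1_(A i) x <= X x) /\
         r = \sum_(i < n) c i * P (A i)].

Lemma ba_integralE X : ba_integral P X = sup (baS X).
Proof. by []. Qed.

Lemma baS_has_sup X : Bb X -> has_sup (baS X).
Proof.
move=> /Bb_bound [M [M0 hM]]; split.
  exists (\sum_(i < 1) (- M) * P setT); exists 1%N, (fun=> - M), (fun=> setT).
  split=> //; split=> // x; rewrite big_ord1 indicE mem_set // mulr1.
  by case/andP: (hM x).
exists M => _ [n [c [A [mA [hle ->]]]]]; apply: ba_simple_le => // x.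
by apply: le_trans (hle x) _; case/andP: (hM x).
Qed.

Lemma ba_integral_mono X Y : Bb X -> Bb Y -> (forall x, X x <= Y x) ->
  ba_integral P X <= ba_integral P Y.
Proof.
move=> bX bY hXY; rewrite !ba_integralE.
apply: ge_sup; first by case: (baS_has_sup bX).
move=> r [n [c [A [mA [hle ->]]]]]; apply: (sup_upper_bound (baS_has_sup bY)).
exists n, c, A; split => //; split => // x; exact: le_trans (hle x) (hXY x).
Qed.

End BA.


Section RM.
Context {d : measure_display} {T : measurableType d} {R : realType}.
Variables (C : set (T -> R)) (H : (T -> R) -> R).
Hypotheses (hC : linear_subspace_with_constants C) (hH : premium_principle C H)
  (hconv : convex_on C H).

Definition SR (X : T -> R) := [set H X0 | X0 in [set X0 | C X0 /\ pw_le X X0]].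

Lemma RMaxE X : RMax C H X = inf (SR X). Proof. by []. Qed.

Lemma C_Bb X : C X -> Bb X. Proof. by case: hC => + _; apply. Qed.

Lemma C_cst c : C (cst c). Proof. by case: hC => _ [_ [_]]; apply. Qed.

Lemma C_addc X m : C X -> C (fun x => X x + m).
Proof. by move=> CX; case: hC => _ [hadd _]; exact: (hadd _ _ CX (C_cst m)). Qed.

Lemma C_mix (l : R) X Y : C X -> C Y -> C (fun x => l * X x + (1 - l) * Y x).
Proof.
move=> CX CY; case: hC => _ [hadd [hsc _]].
exact: (hadd _ _ (hsc l _ CX) (hsc (1 - l) _ CY)).
Qed.

Lemma H_cash X m : C X -> H (fun x => X x + m) = H X + m.
Proof. by case: hH => + _; apply. Qed.

Lemma H_lb X m : C X -> (forall x, m <= X x) -> m <= H X.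
Proof.
move=> CX hm; case: hH => _ [_ hpos].
have := hpos _ (C_addc (- m) CX).
rewrite H_cash // => h.
have : 0 <= H X + - m by apply: h => x; rewrite /cst subr_ge0.
lra.
Qed.

Lemma SR_nonempty X : Bb X -> SR X !=set0.
Proof.
move=> /Bb_bound [M [_ hM]]; exists (H (cst M)), (cst M) => //; split.
  exact: C_cst.
by move=> x; case/andP: (hM x).
Qed.

Lemma SR_lb X m : (forall x, m <= X x) -> lbound (SR X) m.
Proof.
move=> hm _ [X0 [CX0 hX0] <-]; apply: H_lb => // x; exact: le_trans (hm x) (hX0 x).
Qed.

Lemma SR_has_lb X : Bb X -> has_lbound (SR X).
Proof.
move=> /Bb_bound [M [_ hM]]; exists (- M); apply: SR_lb => x.
by case/andP: (hM x).
Qed.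

Lemma RMax_le X Y0 : Bb X -> C Y0 -> pw_le X Y0 -> RMax C H X <= H Y0.
Proof. by move=> bX CY hY; apply: inf_le_elem; [exact: SR_has_lb|exists Y0]. Qed.

Lemma RMax_lb X m : Bb X -> (forall x, m <= X x) -> m <= RMax C H X.
Proof. move=> bX hm; apply: inf_ge; [exact: SR_nonempty| exact: SR_lb]. Qed.

Lemma RMax_mono X Y : Bb X -> Bb Y -> (forall x, X x <= Y x) ->
  RMax C H X <= RMax C H Y.
Proof.
move=> bX bY hXY; rewrite [RMax C H Y]RMaxE; apply: inf_ge; first exact: SR_nonempty.
move=> _ [Y0 [CY0 hY0] <-]; apply: RMax_le => // x; exact: le_trans (hXY x) (hY0 x).
Qed.

Lemma RMax_cash_le X m : Bb X -> RMax C H (fun x => X x + m) <= RMax C H X + m.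
Proof.
move=> bX; rewrite -lerBlDr [RMax C H X]RMaxE; apply: inf_ge; first exact: SR_nonempty.
move=> _ [X0 [CX0 hX0] <-]; rewrite lerBlDr -H_cash //.
apply: RMax_le; first by apply: Bb_add => //; exact: Bb_cst.
  exact: C_addc.
by move=> x; rewrite lerD2r.
Qed.

Lemma RMax_cash X m : Bb X -> RMax C H (fun x => X x + m) = RMax C H X + m.
Proof.
move=> bX; apply/eqP; rewrite eq_le RMax_cash_le //=.
have bXm : Bb (fun x => X x + m) by apply: Bb_add => //; exact: Bb_cst.
have := RMax_cash_le (- m) bXm.
have -> : (fun x => X x + m + - m) = X by apply/funext => x; rewrite addrK.
lra.
Qed.

Lemma RMax_convex X Y (l : R) : Bb X -> Bb Y -> 0 <= l <= 1 ->
  RMax C H (fun x => l * X x + (1 - l) * Y x) <= l * RMax C H X + (1 - l) * RMax C H Y.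
Proof.
move=> bX bY /andP[l0 l1]; apply/ler_addgt0Pr => e e0.
have [_ [X0 [CX0 hX0] <-] hXe] := inf_approx (SR_nonempty bX) (SR_has_lb bX) e0.
have [_ [Y0 [CY0 hYe'] <-] hYe] := inf_approx (SR_nonempty bY) (SR_has_lb bY) e0.
rewrite -!RMaxE in hXe hYe.
have bmix : Bb (fun x => l * X x + (1 - l) * Y x).
  by apply: Bb_add; apply: Bb_scale.
have h1 := RMax_le bmix (C_mix l CX0 CY0).
have h2 : pw_le (fun x => l * X x + (1 - l) * Y x) (fun x => l * X0 x + (1 - l) * Y0 x).
  move=> x; apply: lerD; apply: ler_wpM2l; rewrite ?subr_ge0 //; try exact: hX0; try exact: hYe'.
have {h1 h2}h1 := h1 h2.
have h3 := hconv (l := l) (X := X0) (Y := Y0) (ltac:(by rewrite l0 l1)) CX0 CY0.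
have l1' : 0 <= 1 - l by rewrite subr_ge0.
nra.
Qed.

End RM.


Section HB.
Context {d : measure_display} {T : measurableType d} {R : realType}.
Implicit Types (f g x y z : T -> R).

Definition fadd f g : T -> R := fun t => f t + g t.
Definition fsc (a : R) f : T -> R := fun t => a * f t.
Definition fzero : T -> R := fun _ => 0.

Lemma Bb_fadd f g : Bb f -> Bb g -> Bb (fadd f g). Proof. exact: Bb_add. Qed.
Lemma Bb_fsc a f : Bb f -> Bb (fsc a f). Proof. exact: Bb_scale. Qed.
Lemma Bb_fzero : Bb fzero. Proof. exact: (Bb_cst 0). Qed.

Definition sublin (q : (T -> R) -> R) :=
  (forall f g, Bb f -> Bb g -> q (fadd f g) <= q f + q g) /\
  (forall a f, 0 < a -> Bb f -> q (fsc a f) = a * q f).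

Lemma sublin_zero q : sublin q -> q fzero = 0.
Proof.
move=> [_ hom]; have := hom 2 fzero (ltr0Sn _ 1) Bb_fzero.
have -> : fsc 2 fzero = fzero by apply/funext => t; rewrite /fsc /fzero mulr0.
lra.
Qed.

Lemma sublin_hom0 q a f : sublin q -> 0 <= a -> Bb f -> q (fsc a f) = a * q f.
Proof.
move=> hq; rewrite le_eqVlt => /orP[/eqP <-|a0] bf; last by case: hq => _; apply.
have -> : fsc 0 f = fzero by apply/funext => t; rewrite /fsc /fzero mul0r.
by rewrite sublin_zero // mul0r.
Qed.

Lemma sublin_neg q f : sublin q -> Bb f -> - q (fsc (-1) f) <= q f.
Proof.
move=> hq bf; case: (hq) => sub _.
have := sub _ _ bf (Bb_fsc (-1) bf).
have -> : fadd f (fsc (-1) f) = fzero.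
  by apply/funext => t; rewrite /fadd /fsc /fzero mulN1r subrr.
rewrite sublin_zero //; lra.
Qed.

Lemma mulVle (a u v : R) : 0 < a -> a^-1 * u <= v -> u <= a * v.
Proof. move=> a0 h; have ia : 0 < a^-1 by rewrite invr_gt0.
by rewrite -(ler_pM2l ia) mulrA mulVf ?gt_eqF // mul1r. Qed.

Lemma leVmul (a u v : R) : 0 < a -> u <= a * v -> a^-1 * u <= v.
Proof. by move=> a0 h; rewrite -(ler_pM2l a0) mulrA divff ?gt_eqF // mul1r. Qed.

Variable p : (T -> R) -> R.
Hypothesis hp : sublin p.

Definition goodq (q : (T -> R) -> R) := sublin q /\ forall f, Bb f -> q f <= p f.

Lemma minimal_linear q : goodq q ->
  (forall q', goodq q' -> (forall f, Bb f -> q' f <= q f) -> forall f, Bb f -> q f <= q' f) ->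
  forall f g, Bb f -> Bb g -> q (fadd f g) = q f + q g.
Proof.
move=> [hq qp] qmin x yy hbx hby.
case: (hq) => qsub qhom.
pose S y := [set q (fadd y (fsc r x)) - r * q x | r in [set r : R | 0 <= r]].
pose qx y := inf (S y).
have Sne y : S y !=set0 by exists (q (fadd y (fsc 0 x)) - 0 * q x); exists 0 => //=.
have Slb y : Bb y -> lbound (S y) (- q (fsc (-1) y)).
  move=> bY _ [r /= r0 <-].
  have := qsub _ _ (Bb_fadd bY (Bb_fsc r hbx)) (Bb_fsc (-1) bY).
  have -> : fadd (fadd y (fsc r x)) (fsc (-1) y) = fsc r x.
    by apply/funext => t; rewrite /fadd /fsc; ring.
  rewrite sublin_hom0 //; lra.
have Shl y : Bb y -> has_lbound (S y) by move=> bY; exists (- q (fsc (-1) y)); exact: Slb.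
have qx_le y r : Bb y -> 0 <= r -> qx y <= q (fadd y (fsc r x)) - r * q x.
  by move=> bY r0; apply: inf_le_elem; [exact: Shl | exists r].
have qx_ge y m : (forall r, 0 <= r -> m <= q (fadd y (fsc r x)) - r * q x) -> m <= qx y.
  by move=> hm; apply: inf_ge => // _ [r /= r0 <-]; exact: hm.
have qx_q y : Bb y -> qx y <= q y.
  move=> bY; have := qx_le y 0 bY (lexx _).
  have -> : fadd y (fsc 0 x) = y by apply/funext => t; rewrite /fadd /fsc mul0r addr0.
  by rewrite mul0r subr0.
have gx : goodq qx.
  split; last by move=> f bf; exact: le_trans (qx_q f bf) (qp f bf).
  split.
    move=> f g bf bg; apply/ler_addgt0Pr => e e0.
    have e20 : 0 < e / 2 by rewrite divr_gt0.
    have [_ [r1 /= r10 <-] h1] := inf_approx (Sne f) (Shl f bf) e20.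
    have [_ [r2 /= r20 <-] h2] := inf_approx (Sne g) (Shl g bg) e20.
    have r120 : 0 <= r1 + r2 by rewrite addr_ge0.
    have := qx_le (fadd f g) (r1 + r2) (Bb_fadd bf bg) r120.
    have := qsub _ _ (Bb_fadd bf (Bb_fsc r1 hbx)) (Bb_fadd bg (Bb_fsc r2 hbx)).
    have -> : fadd (fadd f (fsc r1 x)) (fadd g (fsc r2 x)) = fadd (fadd f g) (fsc (r1 + r2) x).
      by apply/funext => t; rewrite /fadd /fsc; ring.
    rewrite /qx in h1 h2 *.
    move: h1 h2; set A1 := inf (S f); set A2 := inf (S g); set A3 := inf (S (fadd f g)).
    set u := q (fadd f (fsc r1 x)); set v := q (fadd g (fsc r2 x)).
    set w := q (fadd (fadd f g) (fsc (r1 + r2) x)).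
    move=> h1 h2 h3 h4.
    have : e / 2 + e / 2 = e by rewrite -splitr.
    nra.
  move=> a f a0 bf; apply/eqP; rewrite eq_le; apply/andP; split.
    apply: (mulVle a0); apply: qx_ge => r r0; apply: (leVmul a0).
    have := qx_le (fsc a f) (a * r) (Bb_fsc a bf) (mulr_ge0 (ltW a0) r0).
    have -> : fadd (fsc a f) (fsc (a * r) x) = fsc a (fadd f (fsc r x)).
      by apply/funext => t; rewrite /fadd /fsc; ring.
    rewrite qhom //; last exact: Bb_fadd bf (Bb_fsc r hbx).
    by move=> h; apply: le_trans h _; rewrite mulrBr mulrA.
  apply: qx_ge => r r0.
  have ra0 : 0 <= r / a by rewrite divr_ge0 // ltW.
  have := qx_le f (r / a) bf ra0.
  have -> : fadd (fsc a f) (fsc r x) = fsc a (fadd f (fsc (r / a) x)).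
    apply/funext => t; rewrite /fadd /fsc mulrDr mulrA mulrCA divff ?mulr1 //.
    by rewrite gt_eqF.
  rewrite qhom //; last exact: Bb_fadd bf (Bb_fsc _ hbx).
  move=> h; rewrite -(ler_pM2l a0) in h; apply: le_trans h _.
  rewrite mulrBr [a * (r / a * _)]mulrA [a * (r / a)]mulrCA divff ?mulr1 //.
  by rewrite gt_eqF.
have hmin := qmin qx gx qx_q.
have h1 := hmin yy hby.
have h2 := qx_le yy 1 hby ler01.
have e : fadd yy (fsc 1 x) = fadd x yy by apply/funext => t; rewrite /fadd /fsc mul1r addrC.
rewrite e mul1r in h2.
have := qsub _ _ hbx hby.
lra.
Qed.

End HB.


Section HB2.
Context {d : measure_display} {T : measurableType d} {R : realType}.
Variable p : (T -> R) -> R.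
Hypothesis hp : sublin p.

Lemma chain_inf (A : set {q : (T -> R) -> R | goodq p q}) s0 :
  A s0 ->
  (forall s t, A s -> A t -> (forall f, Bb f -> sval t f <= sval s f) \/
                              (forall f, Bb f -> sval s f <= sval t f)) ->
  let m := fun f => inf [set sval s f | s in A] in
  goodq p m /\ forall s, A s -> forall f, Bb f -> m f <= sval s f.
Proof.
move=> As0 tot m.
have ne f : [set sval s f | s in A] !=set0 by exists (sval s0 f), s0.
have lb f : Bb f -> lbound [set sval s f | s in A] (- p (fsc (-1) f)).
  move=> bf _ [s As <-]; case: (svalP s) => hs sp.
  have := sublin_neg hs bf; have := sp _ (Bb_fsc (-1) bf); lra.
have hl f : Bb f -> has_lbound [set sval s f | s in A].
  by move=> bf; exists (- p (fsc (-1) f)); exact: lb.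
have mle s f : A s -> Bb f -> m f <= sval s f.
  by move=> As bf; apply: inf_le_elem; [exact: hl | exists s].
have mge f u : (forall s, A s -> u <= sval s f) -> u <= m f.
  by move=> h; apply: inf_ge => // _ [s As <-]; exact: h.
split; last by move=> s As f bf; exact: mle.
split; last first.
  by move=> f bf; apply: le_trans (mle s0 f As0 bf) _; case: (svalP s0) => _; apply.
split.
  move=> f g bf bg; apply/ler_addgt0Pr => e e0.
  have e20 : 0 < e / 2 by rewrite divr_gt0.
  have [_ [s1 As1 <-] h1] := inf_approx (ne f) (hl f bf) e20.
  have [_ [s2 As2 <-] h2] := inf_approx (ne g) (hl g bg) e20.
  rewrite -/(m f) -/(m g) in h1 h2.
  have ee : e / 2 + e / 2 = e by rewrite -splitr.
  case: (tot s1 s2 As1 As2) => h12.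
    have := mle s2 _ As2 (Bb_fadd bf bg).
    case: (svalP s2) => [[sub _] _]; have := sub f g bf bg.
    have := h12 f bf; lra.
  have := mle s1 _ As1 (Bb_fadd bf bg).
  case: (svalP s1) => [[sub _] _]; have := sub f g bf bg.
  have := h12 g bg; lra.
move=> a f a0 bf; apply/eqP; rewrite eq_le; apply/andP; split.
  apply: (mulVle a0); apply: mge => s As; apply: (leVmul a0).
  have := mle s _ As (Bb_fsc a bf).
  by case: (svalP s) => [[_ hom] _]; rewrite hom.
apply: mge => s As; case: (svalP s) => [[_ hom] _]; rewrite hom //.
by rewrite ler_pM2l //; exact: mle.
Qed.

Lemma hahn_banach : exists l : (T -> R) -> R,
  (forall f g, Bb f -> Bb g -> l (fadd f g) = l f + l g) /\
  (forall a f, Bb f -> l (fsc a f) = a * l f) /\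
  (forall f, Bb f -> l f <= p f).
Proof.
have gp : goodq p p by split => // f _.
pose Q := {q : (T -> R) -> R | goodq p q}.
pose Rel := fun (a b : Q) => `[< forall f, Bb f -> sval b f <= sval a f >].
have [t tmax] : exists t, premaximal Rel t.
  apply: (@ZL_preorder Q (exist _ p gp) Rel).
  - by move=> a; apply/asboolP => f _.
  - move=> a b c /asboolP hab /asboolP hbc; apply/asboolP => f bf.
    exact: le_trans (hbc f bf) (hab f bf).
  - move=> A tot; have [[s0 As0]|nA] := pselect (exists s, A s); last first.
      by exists (exist _ p gp) => s As; exfalso; apply: nA; exists s.
    have tot' : forall s t, A s -> A t -> (forall f, Bb f -> sval t f <= sval s f) \/
                              (forall f, Bb f -> sval s f <= sval t f).
      by move=> s u As Au; case: (tot s u As Au) => /asboolP h; [left|right].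
    have [gm hm] := chain_inf As0 tot'.
    by exists (exist _ _ gm) => s As; apply/asboolP => f bf; exact: hm.
case: t tmax => q gq /= tmax.
have qmin : forall q', goodq p q' -> (forall f, Bb f -> q' f <= q f) ->
    forall f, Bb f -> q f <= q' f.
  move=> q' gq' h; have := tmax (exist _ q' gq').
  by move=> /(_ (asboolT h)) /asboolP.
have add := minimal_linear gq qmin.
case: (gq) => [[qsub qhom] qp].
have q0 := sublin_zero (conj qsub qhom).
have qneg f : Bb f -> q (fsc (-1) f) = - q f.
  move=> bf; have := add f (fsc (-1) f) bf (Bb_fsc (-1) bf).
  have -> : fadd f (fsc (-1) f) = fzero.
    by apply/funext => t; rewrite /fadd /fsc /fzero mulN1r subrr.
  rewrite q0; lra.
exists q; split => //; split => // a f bf.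
have [a0|a0|->] := ltgtP a 0; last first.
- have -> : fsc 0 f = fzero by apply/funext => t; rewrite /fsc /fzero mul0r.
  by rewrite q0 mul0r.
- exact: qhom.
have -> : fsc a f = fsc (- a) (fsc (-1) f).
  by apply/funext => t; rewrite /fsc; ring.
rewrite qhom ?oppr_gt0 //; last exact: Bb_fsc.
by rewrite qneg // mulrNN.
Qed.

End HB2.


Section Subgrad.
Context {d : measure_display} {T : measurableType d} {R : realType}.
Variable rho : (T -> R) -> R.
Hypothesis hconv : forall X Y (l : R), Bb X -> Bb Y -> 0 <= l <= 1 ->
  rho (fun x => l * X x + (1 - l) * Y x) <= l * rho X + (1 - l) * rho Y.
Hypothesis hcash : forall X (m : R), Bb X -> rho (fun x => X x + m) = rho X + m.
Hypothesis hmono : forall X Y, Bb X -> Bb Y -> (forall x, X x <= Y x) -> rho X <= rho Y.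
Variable X0 : T -> R.
Hypothesis bX0 : Bb X0.

Let g (h : T -> R) := rho (fadd X0 h) - rho X0.
Let qq (h : T -> R) (t : R) := g (fsc t h) / t.
Let S h := [set qq h t | t in [set t : R | 0 < t]].
Let p h := inf (S h).

Lemma g_lb h (m : R) : Bb h -> (forall x, m <= h x) -> m <= g h.
Proof.
move=> bh hm; rewrite /g.
have b1 : Bb (fun x => X0 x + m) by apply: Bb_add => //; exact: Bb_cst.
have := hmono b1 (Bb_fadd bX0 bh).
rewrite hcash // => h1; have : rho X0 + m <= rho (fadd X0 h).
  by apply: h1 => x; rewrite /fadd lerD2l.
lra.
Qed.

Lemma g_ub h (m : R) : Bb h -> (forall x, h x <= m) -> g h <= m.
Proof.
move=> bh hm; rewrite /g.
have b1 : Bb (fun x => X0 x + m) by apply: Bb_add => //; exact: Bb_cst.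
have := hmono (Bb_fadd bX0 bh) b1.
rewrite hcash // => h1; have : rho (fadd X0 h) <= rho X0 + m.
  by apply: h1 => x; rewrite /fadd lerD2l.
lra.
Qed.

Lemma qq_mono h s t : Bb h -> 0 < s -> s <= t -> qq h s <= qq h t.
Proof.
move=> bh s0 st; have t0 : 0 < t by exact: lt_le_trans st.
rewrite /qq.
set l := s / t.
have l0 : 0 <= l by rewrite divr_ge0 // ltW.
have l1 : l <= 1 by rewrite ler_pdivrMr // mul1r.
have e : fadd X0 (fsc s h) = (fun x => l * (fadd X0 (fsc t h)) x + (1 - l) * X0 x).
  apply/funext => x; rewrite /fadd /fsc /l; field; exact: lt0r_neq0.
have := hconv (Bb_fadd bX0 (Bb_fsc t bh)) bX0 (l := l) (ltac:(by rewrite l0 l1)).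
rewrite -e => hc.
have hh : g (fsc s h) <= l * g (fsc t h) by rewrite /g; lra.
rewrite ler_pdivrMr //; apply: le_trans hh _.
have -> : g (fsc t h) / t * s = l * g (fsc t h) by rewrite /l; field; exact: lt0r_neq0.
by [].
Qed.

Lemma qq_lb h t (M : R) : Bb h -> 0 < t -> (forall x, - M <= h x) -> - M <= qq h t.
Proof.
move=> bh t0 hM; rewrite /qq ler_pdivlMr //.
apply: g_lb; first exact: Bb_fsc.
move=> x; rewrite /fsc; have := hM x; nra.
Qed.

Lemma S_ne h : S h !=set0.
Proof. by exists (qq h 1); exists 1 => //=; exact: ltr01. Qed.

Lemma S_hl h : Bb h -> has_lbound (S h).
Proof.
move=> /[dup] bh /Bb_bound [M [_ hM]]; exists (- M) => _ [t /= t0 <-].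
by apply: qq_lb => // x; case/andP: (hM x).
Qed.

Lemma p_le h t : Bb h -> 0 < t -> p h <= qq h t.
Proof. by move=> bh t0; apply: inf_le_elem; [exact: S_hl | exists t]. Qed.

Lemma p_ge h u : (forall t, 0 < t -> u <= qq h t) -> u <= p h.
Proof. by move=> hu; apply: inf_ge; [exact: S_ne | move=> _ [t /= t0 <-]; exact: hu]. Qed.

Lemma p_le_g h : Bb h -> p h <= g h.
Proof.
move=> bh; have := p_le bh ltr01; rewrite /qq divr1.
by have -> : fsc 1 h = h by apply/funext => x; rewrite /fsc mul1r.
Qed.

Lemma p_sublin : sublin p.
Proof.
split.
  move=> f k bf bk; apply/ler_addgt0Pr => e e0.
  have e20 : 0 < e / 2 by rewrite divr_gt0.
  have [_ [s /= s0 <-] h1] := inf_approx (S_ne f) (S_hl bf) e20.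
  have [_ [u /= u0 <-] h2] := inf_approx (S_ne k) (S_hl bk) e20.
  rewrite -/(p f) -/(p k) in h1 h2.
  set v := Num.min s u.
  have v0 : 0 < v by rewrite /v lt_min s0 u0.
  have vs : v <= s by rewrite /v ge_min lexx.
  have vu : v <= u by rewrite /v ge_min lexx orbT.
  have m1 := qq_mono bf v0 vs; have m2 := qq_mono bk v0 vu.
  have v20 : 0 < v / 2 by rewrite divr_gt0.
  have hp := p_le (Bb_fadd bf bk) v20.
  have hq : qq (fadd f k) (v / 2) <= qq f v + qq k v.
    rewrite /qq ler_pdivrMr //.
    have hl : 0 <= (2^-1 : R) <= 1.
      have a : (0:R) <= 2^-1 by lra.
      have b : (2^-1:R) <= 1 by lra.
      by rewrite a b.
    have := hconv (Bb_fadd bX0 (Bb_fsc v bf)) (Bb_fadd bX0 (Bb_fsc v bk)) hl.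
    have -> : (fun x => 2^-1 * fadd X0 (fsc v f) x + (1 - 2^-1) * fadd X0 (fsc v k) x)
      = fadd X0 (fsc (v / 2) (fadd f k)).
      by apply/funext => x; rewrite /fadd /fsc; field.
    move=> hc.
    have -> : (g (fsc v f) / v + g (fsc v k) / v) * (v / 2) =
      2^-1 * g (fsc v f) + 2^-1 * g (fsc v k) by field; exact: lt0r_neq0.
    rewrite /g; lra.
  have : e / 2 + e / 2 = e by rewrite -splitr.
  lra.
move=> a f a0 bf; apply/eqP; rewrite eq_le; apply/andP; split.
  apply: (mulVle a0); apply: p_ge => t t0; apply: (leVmul a0).
  have ta0 : 0 < t / a by rewrite divr_gt0.
  apply: le_trans (p_le (Bb_fsc a bf) ta0) _; rewrite /qq.
  have -> : fsc (t / a) (fsc a f) = fsc t f.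
    by apply/funext => x; rewrite /fsc; field; exact: lt0r_neq0.
  rewrite le_eqVlt; apply/orP; left; apply/eqP; field; by rewrite (lt0r_neq0 t0) (lt0r_neq0 a0).
apply: p_ge => t t0.
have ta0 : 0 < t * a by rewrite mulr_gt0.
have := p_le bf ta0; rewrite -(ler_pM2l a0) => h; apply: le_trans h _.
rewrite /qq.
have -> : fsc t (fsc a f) = fsc (t * a) f by apply/funext => x; rewrite /fsc mulrA.
rewrite le_eqVlt; apply/orP; left; apply/eqP; field; by rewrite (lt0r_neq0 t0) (lt0r_neq0 a0).
Qed.

Lemma subgrad : exists l : (T -> R) -> R,
  (forall f k, Bb f -> Bb k -> l (fadd f k) = l f + l k) /\
  (forall a f, Bb f -> l (fsc a f) = a * l f) /\
  (forall Y, Bb Y -> l Y - rho Y <= l X0 - rho X0) /\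
  (forall c, l (cst c) = c) /\
  (forall h, Bb h -> (forall x, 0 <= h x) -> 0 <= l h).
Proof.
have [l [ladd [lsc lp]]] := hahn_banach p_sublin.
have lg h : Bb h -> l h <= g h by move=> bh; exact: le_trans (lp h bh) (p_le_g bh).
exists l; split => //; split => //; split.
  move=> Y bY; have bh : Bb (fadd Y (fsc (-1) X0)) by apply: Bb_fadd => //; exact: Bb_fsc.
  have := lg _ bh; rewrite ladd // ?lsc //; last exact: Bb_fsc.
  rewrite /g; have -> : fadd X0 (fadd Y (fsc (-1) X0)) = Y.
    by apply/funext => x; rewrite /fadd /fsc; ring.
  lra.
split.
  have b1 := Bb_cst (T := T) (1 : R).
  have h1 : l (cst 1) <= 1 by apply: le_trans (lg _ b1) _; apply: g_ub => // x.
  have h2 : l (fsc (-1) (cst 1)) <= -1.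
    apply: le_trans (lg _ (Bb_fsc _ b1)) _; apply: g_ub; first exact: Bb_fsc.
    by move=> x; rewrite /fsc /cst mulr1.
  rewrite lsc // in h2.
  have l1 : l (cst 1) = 1 by lra.
  move=> c; have -> : (cst c : T -> R) = fsc c (cst 1).
    by apply/funext => x; rewrite /fsc /cst mulr1.
  by rewrite lsc // l1 mulr1.
move=> h bh h0.
have hx : forall x, fsc (-1) h x <= 0 by move=> x; rewrite /fsc mulN1r oppr_le0; exact: h0.
have := le_trans (lg _ (Bb_fsc (-1) bh)) (g_ub (Bb_fsc _ bh) hx).
rewrite lsc //; lra.
Qed.

End Subgrad.


Section Lin.
Context {d : measure_display} {T : measurableType d} {R : realType}.
Variable l : (T -> R) -> R.
Hypotheses (ladd : forall f k, Bb f -> Bb k -> l (fadd f k) = l f + l k)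
  (lsc : forall a f, Bb f -> l (fsc a f) = a * l f)
  (lcst : forall c, l (cst c) = c)
  (lpos : forall h, Bb h -> (forall x, 0 <= h x) -> 0 <= l h).

Lemma l_mono X Y : Bb X -> Bb Y -> (forall x, X x <= Y x) -> l X <= l Y.
Proof.
move=> bX bY hXY.
have bh : Bb (fadd Y (fsc (-1) X)) by apply: Bb_fadd => //; exact: Bb_fsc.
have := lpos bh; rewrite ladd // ?lsc //; last exact: Bb_fsc.
move=> h; have : 0 <= l Y + -1 * l X.
  by apply: h => x; rewrite /fadd /fsc mulN1r subr_ge0.
lra.
Qed.

Lemma l_shift X (c : R) : Bb X -> l (fun x => X x + c) = l X + c.
Proof. by move=> bX; have := ladd bX (Bb_cst c); rewrite lcst. Qed.

Definition sf n (c : 'I_n -> R) (A : 'I_n -> set T) : T -> R :=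
  fun x => \sum_(i < n) c i * \1_(A i) x.

Lemma sf_Bb_l n c A : (forall i, measurable (A i)) ->
  Bb (@sf n c A) /\ l (sf c A) = \sum_(i < n) c i * l (\1_(A i)).
Proof.
elim: n c A => [|n IH] c A mA.
  have -> : sf c A = cst 0 by apply/funext => x; rewrite /sf big_ord0.
  by rewrite big_ord0 lcst; split => //; exact: Bb_cst.
have [b1 l1] := IH (fun i => c (widen_ord (leqnSn n) i)) (fun i => A (widen_ord (leqnSn n) i))
  (fun i => mA _).
have b2 : Bb (fsc (c ord_max) (\1_(A ord_max))) by apply: Bb_fsc; exact: Bb_ind.
have -> : sf c A = fadd (sf (fun i => c (widen_ord (leqnSn n) i)) (fun i => A (widen_ord (leqnSn n) i)))
   (fsc (c ord_max) (\1_(A ord_max))).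
  by apply/funext => x; rewrite /sf /fadd /fsc big_ord_recr.
split; first exact: Bb_fadd.
rewrite ladd // l1 lsc ?big_ord_recr //; exact: Bb_ind.
Qed.

Definition Pl (A : set T) := l (\1_A).

Lemma Pl_ba : ba_prob Pl.
Proof.
split.
  rewrite /Pl; have -> : (\1_setT : T -> R) = cst 1.
    by apply/funext => x; rewrite indicE mem_set.
  exact: lcst.
split.
  move=> A mA; apply: lpos; first exact: Bb_ind.
  by move=> x; rewrite indicE; case: (_ \in _).
move=> A B mA mB AB0; rewrite /Pl -ladd; try exact: Bb_ind.
congr l; apply/funext => x; rewrite /fadd !indicE.
rewrite in_setU; case: (boolP (x \in A)) => xA; case: (boolP (x \in B)) => xB /=.
- exfalso; have : (A `&` B) x by split; apply/set_mem.
  by rewrite AB0.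
- by rewrite addr0.
- by rewrite add0r.
- by rewrite addr0.
Qed.

Lemma step_approx (X : T -> R) (M e : R) (x : T) (N : nat) :
  - M <= X x -> 0 < e ->
  let f := \sum_(i < N) e * \1_([set y | - M + i.+1%:R * e <= X y]) x in
  (f = N%:R * e /\ N%:R * e <= X x + M) \/
  (f <= N%:R * e /\ f <= X x + M < f + e).
Proof.
move=> hM e0; elim: N => [|N IH] /=.
  by left; rewrite big_ord0 mul0r; split => //; lra.
rewrite big_ord_recr /=.
move: IH; set f := \sum_(i < N) _ => IH.
have hS : N.+1%:R * e = N%:R * e + e by rewrite -nat1r mulrDl mul1r addrC.
rewrite indicE; have [hx|hx] := pselect (- M + N.+1%:R * e <= X x).
  rewrite mem_set // mulr1.
  case: IH => [[-> h]|[h1 /andP[h2 h3]]].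
    by left; rewrite hS; split => //; lra.
  exfalso; lra.
rewrite memNset // mulr0 addr0.
have hx' : X x < - M + N.+1%:R * e by rewrite ltNge; apply/negP.
case: IH => [[-> h]|[h1 /andP[h2 h3]]].
  by right; rewrite hS; split; [lra | apply/andP; split; lra].
by right; rewrite hS; split; [lra | apply/andP; split; lra].
Qed.

Lemma ba_integral_l X : Bb X -> ba_integral Pl X = l X.
Proof.
move=> bX; have hP := Pl_ba.
have Pl_sf n c A : (forall i, measurable (A i)) -> \sum_(i < n) c i * Pl (A i) = l (@sf n c A).
  by move=> mA; rewrite (proj2 (sf_Bb_l c mA)).
apply/eqP; rewrite eq_le; apply/andP; split.
  rewrite ba_integralE; apply: ge_sup; first by case: (baS_has_sup hP bX).
  move=> r [n [c [A [mA [hle ->]]]]]; rewrite Pl_sf //.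
  apply: l_mono => //; exact: (proj1 (sf_Bb_l c mA)).
apply/ler_addgt0Pr => e e0.
have [M [M0 hM]] := Bb_bound bX.
pose N := (Num.truncn (2 * M / e)).+1.
have hN : 2 * M < N%:R * e.
  by rewrite -ltr_pdivrMr // /N; exact: truncnS_gt.
pose c := fun i : 'I_N.+1 => if val i == 0%N then - M else e.
pose A := fun i : 'I_N.+1 => [set y | - M + (val i)%:R * e <= X y].
have mA i : measurable (A i) by apply: Bb_levelset.
have [bs ls] := sf_Bb_l c mA.
have key x : sf c A x <= X x <= sf c A x + e.
  rewrite /sf big_ord_recl /= /c /= indicE mem_set; last first.
    by rewrite /A /= mul0r addr0; case/andP: (hM x).
  have -> : \sum_(i < N) (if val (lift ord0 i) == 0%N then - M else e) *
      \1_(A (lift ord0 i)) x = \sum_(i < N) e * \1_([set y | - M + i.+1%:R * e <= X y]) x.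
    by apply: eq_bigr => i _.
  case/andP: (hM x) => hl hu.
  case: (step_approx N hl e0) => /=; set f := \sum_(i < N) _.
    move=> [-> h]; exfalso; lra.
  move=> [_ /andP[h2 h3]]; rewrite mulr1; apply/andP; split; lra.
have h1 : l X <= l (sf c A) + e.
  rewrite -l_shift //; apply: l_mono => //; first by apply: Bb_add => //; exact: Bb_cst.
  by move=> x; case/andP: (key x).
have h2 : l (sf c A) <= ba_integral Pl X.
  rewrite ba_integralE -Pl_sf //; apply: (sup_upper_bound (baS_has_sup hP bX)).
  exists N.+1, c, A; split => //; split => // x; by case/andP: (key x).
lra.
Qed.

End Lin.


Unset Implicit Arguments.

Theorem theorem3p1 (d : measure_display) (T : measurableType d) (R : realType)
  (C : set (T -> R)) (H : (T -> R) -> R) :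
  linear_subspace_with_constants C ->
  premium_principle C H ->
  convex_on C H ->
  (forall X : T -> R, Bb X ->
     (exists2 P : set T -> R, ba_prob P &
        ((RMax C H X)%:E = ((ba_integral P X)%:E - Hstar C H P)%E)) /\
     (forall P : set T -> R, ba_prob P ->
        ((ba_integral P X)%:E - Hstar C H P <= (RMax C H X)%:E)%E)) /\
  (forall P : set T -> R, ba_prob P ->
     Hstar C H P =
       ereal_sup [set ((ba_integral P X - RMax C H X)%:E) | X in (@Bb d T R)]).
Proof.
move=> hC hH hcv.
have Hs_lb P : ((ba_integral P (cst 0) - H (cst 0))%:E <= Hstar C H P)%E.
  by apply: ereal_sup_ubound; exists (cst 0) => //; exact: C_cst.
have hP_le P X : ba_prob P -> Bb X ->
    ((ba_integral P X)%:E - Hstar C H P <= (RMax C H X)%:E)%E.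
  move=> hP bX; have := Hs_lb P; case eq: (Hstar C H P) => [r| |] //= _; last by rewrite addeNy leNye.
  rewrite -EFinB lee_fin RMaxE; apply: inf_ge; first exact: SR_nonempty.
  move=> _ [Y [CY hY] <-].
  have h1 := ba_integral_mono hP bX (C_Bb hC CY) hY.
  have : ((ba_integral P Y - H Y)%:E <= Hstar C H P)%E.
    by apply: ereal_sup_ubound; exists Y.
  rewrite eq lee_fin; lra.
split.
  move=> X bX; split; last by move=> P hP; exact: hP_le.
  have rconv : forall X1 Y1 (l1 : R), Bb X1 -> Bb Y1 -> 0 <= l1 <= 1 ->
      RMax C H (fun x => l1 * X1 x + (1 - l1) * Y1 x) <=
      l1 * RMax C H X1 + (1 - l1) * RMax C H Y1.
    by move=> X1 Y1 l1 b1 b2 hl; exact: RMax_convex.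
  have rcash : forall X1 (m : R), Bb X1 -> RMax C H (fun x => X1 x + m) = RMax C H X1 + m.
    by move=> X1 m b1; exact: RMax_cash.
  have rmono : forall X1 Y1, Bb X1 -> Bb Y1 -> (forall x, X1 x <= Y1 x) ->
      RMax C H X1 <= RMax C H Y1.
    by move=> X1 Y1 b1 b2 h; exact: RMax_mono.
  have [l [ladd [lsc [lsub [lcst lpos]]]]] := subgrad rconv rcash rmono bX.
  have hP : ba_prob (Pl l) := Pl_ba ladd lcst lpos.
  have El Y : Bb Y -> ba_integral (Pl l) Y = l Y := ba_integral_l ladd lsc lcst lpos (X := Y).
  exists (Pl l) => //.
  have hup : (Hstar C H (Pl l) <= (l X - RMax C H X)%:E)%E.
    apply: ge_ereal_sup => _ [Y CY <-]; rewrite lee_fin El; last exact: (C_Bb hC CY).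
    have := RMax_le hC hH (C_Bb hC CY) CY (fun x => lexx (Y x)).
    have := lsub Y (C_Bb hC CY); lra.
  have := hP_le _ X hP bX; have := Hs_lb (Pl l).
  move: hup; case: (Hstar C H (Pl l)) => [r| |] //= h1 _.
  move=> h2; rewrite lee_fin in h1; rewrite -EFinB lee_fin El // in h2.
  rewrite El // -EFinB; congr EFin; lra.
move=> P hP; apply/eqP; rewrite eq_le; apply/andP; split.
  apply: ge_ereal_sup => _ [Y CY <-]; apply: le_ereal_sup_tmp.
  exists ((ba_integral P Y - RMax C H Y)%:E); first by exists Y => //; exact: (C_Bb hC CY).
  rewrite lee_fin; have := RMax_le hC hH (C_Bb hC CY) CY (fun x => lexx (Y x)); lra.
apply: ge_ereal_sup => _ [X bX <-].
have := hP_le P X hP bX; have := Hs_lb P.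
case: (Hstar C H P) => [r| |] //= _.
  by rewrite -EFinB !lee_fin => h; lra.
by move=> _; rewrite leey.
Qed.
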